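(* The set of periodic points of $R$ is dense in $[0,1]$, and for every integer $n\ge1$ the map $R$ has uncountably many periodic points of minimal period $n$.
   Context: Define $\rho$ on binary words: for $b=b_1b_2\dots$, $\rho(b)$ is obtained by deleting every digit $b_n=0$ and replacing every $b_n=1$ by $0$ if $n$ is odd and by $1$ if $n$ is even. For $x\in(0,1]$ let $\beta(x)$ be the unique binary expansion of $x$ with infinitely many $1$'s. Define $R:[0,1]\to[0,1]$ by $R(0)=2/3$ and, for $x\in(0,1]$, $R(x)=\sum_{n\ge1}c_n2^{-n}$ where $c=\rho(\beta(x))$. *)

(* Defs.v *)
From Stdlib Require Import Reals Lra Arith ClassicalEpsilon.
From Coquelicot Require Import Coquelicot.
Open Scope R_scope.

(* Infinite binary words are encoded 0-based: b k is the digit b_(k+1)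
   of the paper's word b = b_1 b_2 ... *)
Definition word := nat -> bool.

Definition bin_val (b : word) : R :=
  Series (fun k => if b k then (1/2)^(k+1) else 0).

Definition inf_many_ones (b : word) : Prop :=
  forall N : nat, exists k : nat, (N <= k)%nat /\ b k = true.

(* beta x : the (unique, for x in (0,1]) binary expansion of x with
   infinitely many 1's, chosen by Hilbert's epsilon. *)
Definition beta (x : R) : word :=
  epsilon (inhabits (fun _ : nat => false))
    (fun b => inf_many_ones b /\ bin_val b = x).

(* number of 1's among b_1 ... b_(k+1)  (0-based: among b 0 .. b k) *)
Fixpoint ones (b : word) (k : nat) : nat :=
  match k with
  | O => if b O then 1%nat else 0%nat
  | S k' => (ones b k' + (if b (S k') then 1%nat else 0%nat))%nat
  end.

(* rho b: delete the 0 digits; the digit b_n = 1 becomes 0 if n is odd and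
   1 if n is even.  The (j+1)-th digit of rho b (0-based index j) comes from
   the (j+1)-th 1 of b; with 0-based index k, paper position n = k+1 is even
   iff k is odd.  If rho b is a finite word, missing digits are 0 (this never
   happens for b = beta x). *)
Definition rho (b : word) : word :=
  fun j => if excluded_middle_informative
                (exists k, b k = true /\ ones b k = S j /\ Nat.odd k = true)
           then true else false.

Definition Rmap (x : R) : R :=
  if Req_EM_T x 0 then 2/3 else bin_val (rho (beta x)).

Definition is_periodic (x : R) : Prop :=
  0 <= x <= 1 /\ exists n : nat, (1 <= n)%nat /\ Nat.iter n Rmap x = x.

Definition has_min_period (n : nat) (x : R) : Prop :=
  0 <= x <= 1 /\ Nat.iter n Rmap x = x /\
  forall m : nat, (1 <= m < n)%nat -> Nat.iter m Rmap x <> x.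

Definition uncountable (P : R -> Prop) : Prop :=
  ~ exists f : nat -> R, forall x, P x -> exists k : nat, f k = x.

(* Main.v *)
Require Import Defs.
From Stdlib Require Import Reals Lra Lia Arith ClassicalEpsilon Classical FunctionalExtensionality.
From Coquelicot Require Import Coquelicot.
Open Scope R_scope.
Open Scope R_scope.

Fixpoint cnt1 (b:word) (m:nat) : nat :=
  match m with O => O | S m' => (cnt1 b m' + (if b m' then 1 else 0))%nat end.

Lemma ones_cnt1 b k : ones b k = cnt1 b (S k).
Proof. induction k; simpl; [destruct (b O); reflexivity|]. rewrite IHk. reflexivity. Qed.

Lemma cnt1_le b m : (cnt1 b m <= m)%nat.
Proof. induction m; simpl; [lia|destruct (b m); lia]. Qed.

Lemma cnt1_lt b m p : (p < m)%nat -> b p = false -> (cnt1 b m < m)%nat.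
Proof.
  induction m; intros H Hb; [lia|]. simpl.
  destruct (Nat.eq_dec p m) as [->|Hne].
  - rewrite Hb. pose proof (cnt1_le b m). lia.
  - assert (p < m)%nat by lia. specialize (IHm H0 Hb). destruct (b m); lia.
Qed.

Lemma cnt1_mono b m1 m2 : (m1 <= m2)%nat -> (cnt1 b m1 <= cnt1 b m2)%nat.
Proof. induction 1; simpl; [lia|destruct (b m); lia]. Qed.

Lemma cnt1_ext b c m : (forall p, (p < m)%nat -> b p = c p) -> cnt1 b m = cnt1 c m.
Proof. induction m; intros H; simpl; [reflexivity|]. rewrite IHm by (intros; apply H; lia).
  rewrite H by lia. reflexivity. Qed.

Lemma cnt1_S_true b m : b m = true -> cnt1 b (S m) = S (cnt1 b m).
Proof. intros H. simpl. rewrite H. lia. Qed.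

Lemma ones_inj b a1 a2 : b a1 = true -> b a2 = true -> ones b a1 = ones b a2 -> a1 = a2.
Proof.
  intros H1 H2 H. rewrite !ones_cnt1 in H.
  destruct (Nat.lt_total a1 a2) as [Hl|[Hl|Hl]]; auto.
  - pose proof (cnt1_mono b (S a1) a2 Hl). rewrite (cnt1_S_true b a2) in H by auto. lia.
  - pose proof (cnt1_mono b (S a2) a1 Hl). rewrite (cnt1_S_true b a1) in H by auto. lia.
Qed.

Lemma bool_eq_iff (a b : bool) : (a = true <-> b = true) -> a = b.
Proof. destruct a, b; intuition congruence. Qed.

Lemma rho_true b j : rho b j = true <-> exists k, b k = true /\ ones b k = S j /\ Nat.odd k = true.
Proof. unfold rho. destruct excluded_middle_informative; split; intros; auto; try congruence.
Qed.

Definition supp (g:word) (M:nat) := forall p, (M <= p)%nat -> g p = false.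

Lemma supp_mono g s1 s2 : (s1 <= s2)%nat -> supp g s1 -> supp g s2.
Proof. intros H Hg p Hp. apply Hg. lia. Qed.

Lemma rho_supp g M : supp g M -> supp (rho g) (cnt1 g M).
Proof.
  intros Hg j Hj. destruct (rho g j) eqn:E; auto.
  apply rho_true in E as [k [Hk [Ho _]]].
  assert (k < M)%nat. { destruct (Nat.lt_ge_cases k M); auto. rewrite Hg in Hk; auto; congruence. }
  rewrite ones_cnt1 in Ho. pose proof (cnt1_mono g (S k) M ltac:(lia)). lia.
Qed.

Lemma cnt1_all g M : (forall p, (p < M)%nat -> g p = true) -> forall k, (k <= M)%nat -> cnt1 g k = k.
Proof. intros H k; induction k; intros Hk; simpl; auto. rewrite H by lia. rewrite IHk by lia. lia. Qed.

Lemma rho_all g M : (forall p, (p < M)%nat -> g p = true) -> supp g M ->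
  forall j, (j < M)%nat -> rho g j = Nat.odd j.
Proof.
  intros Ha Hs j Hj. apply bool_eq_iff. rewrite rho_true. split.
  - intros [k [Hk [Ho Hod]]].
    assert (k < M)%nat. { destruct (Nat.lt_ge_cases k M); auto. rewrite Hs in Hk; auto; congruence. }
    rewrite ones_cnt1, (cnt1_all g M Ha) in Ho by lia. injection Ho as ->. auto.
  - intros Ho. exists j. split; [apply Ha; auto|]. split; auto.
    rewrite ones_cnt1, (cnt1_all g M Ha) by lia. reflexivity.
Qed.

Lemma kill2 g s : supp g (S s) -> supp (rho (rho g)) s.
Proof.
  intros Hg.
  destruct (classic (exists p, (p < S s)%nat /\ g p = false)) as [[p [Hp Hgp]]|Hn].
  - pose proof (cnt1_lt g (S s) p Hp Hgp).
    pose proof (rho_supp _ _ Hg). pose proof (rho_supp _ _ H0).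
    eapply supp_mono; [|exact H1]. pose proof (cnt1_le (rho g) (cnt1 g (S s))). lia.
  - assert (Ha : forall p, (p < S s)%nat -> g p = true).
    { intros p Hp. destruct (g p) eqn:E; auto. exfalso; apply Hn; eauto. }
    pose proof (rho_supp _ _ Hg) as H1. rewrite (cnt1_all g (S s) Ha) in H1 by lia.
    assert (rho g 0%nat = false) by (rewrite (rho_all g (S s) Ha Hg); auto; lia).
    pose proof (cnt1_lt (rho g) (S s) 0 ltac:(lia) H).
    pose proof (rho_supp _ _ H1). eapply supp_mono; [|exact H2]. lia.
Qed.

Lemma kill g s : supp g s -> forall i, (2 * s <= i)%nat -> supp (Nat.iter i rho g) 0.
Proof.
  revert g; induction s; intros g Hg i Hi.
  - induction i; simpl; auto. eapply supp_mono; [|apply rho_supp; apply IHi; lia].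
    simpl; lia.
  - replace i with ((i - 2) + 2)%nat by lia. rewrite Nat.iter_add.
    apply IHs; [|lia]. simpl. apply kill2. auto.
Qed.
Open Scope nat_scope.

Fixpoint cntb (ins : nat -> bool) (k:nat) : nat :=
  match k with O => O | S k' => cntb ins k' + (if ins k' then 0 else 1) end.

Lemma cntb_bound ins k : ins 0 = true -> cntb ins (S k) <= k.
Proof. intros H. induction k; simpl in *; [rewrite H; lia|destruct (ins (S k)); lia]. Qed.

Section Frame.
Variables (L : nat) (f : nat -> word) (ins : nat -> nat -> bool) (next : nat -> nat).

Fixpoint Wf (fuel i p : nat) : bool :=
  match fuel with O => false | S fu =>
   if p <? L then f i p else
   if ins i ((p - L)/2) then false else
   let d := Wf fu (next i) (cnt1 (f i) L + cntb (ins i) ((p - L)/2)) in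
   if Nat.odd p then d else negb d end.

Definition W i p := Wf (S p) i p.

Hypothesis Hins0 : forall i, ins i 0 = true.

Lemma rec_lt i p : ~ p < L -> ins i ((p - L)/2) = false ->
  cnt1 (f i) L + cntb (ins i) ((p - L)/2) < p.
Proof.
  intros H1 H2. set (k := (p - L)/2) in *.
  assert (k <> 0) by (intros E; rewrite E, Hins0 in H2; discriminate).
  pose proof (Nat.Div0.mul_div_le (p - L) 2). fold k in H0.
  destruct k as [|k']; [lia|]. pose proof (cntb_bound (ins i) k' (Hins0 i)).
  pose proof (cnt1_le (f i) L). lia.
Qed.

Lemma Wf_stable : forall fu1 fu2 i p, p < fu1 -> p < fu2 -> Wf fu1 i p = Wf fu2 i p.
Proof.
  induction fu1; intros fu2 i p H1 H2; [lia|]. destruct fu2; [lia|]. cbn [Wf].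
  destruct (p <? L) eqn:E; [reflexivity|]. destruct (ins i ((p - L)/2)) eqn:E2; [reflexivity|].
  apply Nat.ltb_ge in E.
  pose proof (rec_lt i p ltac:(lia) E2).
  rewrite (IHfu1 fu2) by lia. reflexivity.
Qed.

Lemma W_eq i p : W i p =
   if p <? L then f i p else
   if ins i ((p - L)/2) then false else
   let d := W (next i) (cnt1 (f i) L + cntb (ins i) ((p - L)/2)) in
   if Nat.odd p then d else negb d.
Proof.
  unfold W at 1. cbn [Wf]. destruct (p <? L) eqn:E; [reflexivity|]. destruct (ins i ((p - L)/2)) eqn:E2; [reflexivity|].
  apply Nat.ltb_ge in E. pose proof (rec_lt i p ltac:(lia) E2).
  unfold W. cbv zeta. rewrite (Wf_stable p (S (cnt1 (f i) L + cntb (ins i) ((p - L) / 2))) (next i)) by lia. reflexivity.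
Qed.

Lemma W_pre i p : p < L -> W i p = f i p.
Proof. intros H. rewrite W_eq. apply Nat.ltb_lt in H. rewrite H. auto. Qed.

Lemma blk_div L' k r : r < 2 -> (L' + 2 * k + r - L')/2 = k.
Proof. intros H. replace (L' + 2*k + r - L') with (r + k * 2) by lia.
  rewrite Nat.div_add by lia. rewrite Nat.div_small by lia. lia. Qed.

Definition dval i k := W (next i) (cnt1 (f i) L + cntb (ins i) k).

Lemma W_blk0 i k : W i (L + 2*k) = if ins i k then false else
   if Nat.odd L then dval i k else negb (dval i k).
Proof.
  rewrite W_eq. destruct (L + 2*k <? L) eqn:E; [apply Nat.ltb_lt in E; lia|].
  replace ((L + 2*k - L)/2) with k by (replace (L + 2*k - L) with (k*2) by lia; rewrite Nat.div_mul; lia).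
  rewrite Nat.odd_add_mul_2. reflexivity.
Qed.

Lemma W_blk1 i k : W i (L + 2*k + 1) = if ins i k then false else
   if Nat.odd L then negb (dval i k) else dval i k.
Proof.
  rewrite W_eq. destruct (L + 2*k + 1 <? L) eqn:E; [apply Nat.ltb_lt in E; lia|].
  rewrite (blk_div L k 1) by lia.
  rewrite Nat.add_1_r, Nat.odd_succ, Nat.even_add_mul_2, <- Nat.negb_odd.
  destruct (ins i k); auto. destruct (Nat.odd L); auto.
Qed.

Lemma cnt1_Sx b m : cnt1 b (S m) = cnt1 b m + (if b m then 1 else 0).
Proof. reflexivity. Qed.

Lemma W_ones i k : cnt1 (W i) (L + 2*k) = cnt1 (f i) L + cntb (ins i) k.
Proof.
  induction k.
  - rewrite Nat.add_0_r. simpl. rewrite Nat.add_0_r. apply cnt1_ext. intros; apply W_pre; auto.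
  - replace (L + 2 * S k) with (S (L + 2*k + 1)) by lia. rewrite !cnt1_Sx.
    replace (L + 2*k+1) with (S (L + 2*k)) by lia. rewrite cnt1_Sx.
    rewrite IHk. replace (S (L + 2*k)) with (L + 2*k+1) by lia.
    rewrite W_blk0, W_blk1. cbn [cntb]. destruct (ins i k); [lia|].
    destruct (Nat.odd L), (dval i k); simpl; lia.
Qed.

Lemma first_false (g : nat -> bool) : forall d K, g (K + d) = false ->
  exists k, K <= k /\ g k = false /\ (forall q, K <= q < k -> g q = true).
Proof.
  induction d; intros K H.
  - exists K. rewrite Nat.add_0_r in H. split; auto. split; auto. intros; lia.
  - destruct (g K) eqn:E.
    + destruct (IHd (S K)) as [k [H1 [H2 H3]]]. { rewrite <- H. f_equal. lia. }
      exists k. split; [lia|]. split; auto. intros q Hq.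
      destruct (Nat.eq_dec q K); [subst; auto|]. apply H3; lia.
    + exists K. split; auto. split; auto. intros; lia.
Qed.

Lemma cntb_const g K k : K <= k -> (forall q, K <= q < k -> g q = true) -> cntb g k = cntb g K.
Proof. induction 1 as [|k Hle IH]; intros Hq; auto. simpl. rewrite Hq by lia. rewrite IH; [lia|].
  intros; apply Hq; lia. Qed.

Lemma cntb_surj (g : nat -> bool) : (forall K, exists k, K <= k /\ g k = false) ->
  forall j, exists k, g k = false /\ cntb g k = j.
Proof.
  intros Hinf j. induction j.
  - destruct (Hinf 0) as [k0 [_ Hk0]].
    destruct (first_false g k0 0 Hk0) as [k [_ [H2 H3]]]. exists k. split; auto.
    rewrite (cntb_const g 0 k); auto; lia.
  - destruct IHj as [k1 [Hk1 Hc]].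
    destruct (Hinf (S k1)) as [k0 [Hle Hk0]].
    destruct (first_false g (k0 - S k1) (S k1)) as [k [H1 [H2 H3]]].
    { replace (S k1 + (k0 - S k1)) with k0 by lia. auto. }
    exists k. split; auto. rewrite (cntb_const g (S k1) k); auto. simpl. rewrite Hk1. lia.
Qed.

Hypothesis Hinf : forall i K, exists k, K <= k /\ ins i k = false.
Hypothesis C1 : forall i t, t < cnt1 (f i) L ->
   f (next i) t = rho (fun p => andb (p <? L) (f i p)) t.

Lemma W_inf i : inf_many_ones (W i).
Proof.
  intros N. destruct (Hinf i N) as [k [Hk Hi]].
  pose proof (W_blk0 i k) as E0. pose proof (W_blk1 i k) as E1. rewrite Hi in E0, E1.
  destruct (Nat.odd L), (dval i k); simpl in *;
   [exists (L+2*k) | exists (L+2*k+1) | exists (L+2*k+1) | exists (L+2*k)]; split; auto; lia.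
Qed.

Lemma W_rho i j : rho (W i) j = W (next i) j.
Proof.
  set (m := cnt1 (f i) L).
  pose proof (cnt1_le (f i) L) as HmL. fold m in HmL.
  destruct (Nat.lt_ge_cases j m) as [Hj|Hj].
  - rewrite W_pre by lia. rewrite C1 by auto. apply bool_eq_iff. rewrite !rho_true.
    split; intros [k [Hk [Ho Hod]]]; exists k.
    + assert (k < L).
      { destruct (Nat.lt_ge_cases k L) as [|Hkl]; auto. exfalso.
        rewrite ones_cnt1, cnt1_S_true in Ho by auto.
        pose proof (cnt1_mono (W i) L k Hkl).
        rewrite (cnt1_ext (W i) (f i) L) in H by (intros; apply W_pre; auto). fold m in H. lia. }
      rewrite <- W_pre by auto. apply Nat.ltb_lt in H as H'. rewrite H', Hk. split; auto.
      split; auto. rewrite <- Ho, !ones_cnt1. apply cnt1_ext. intros p Hp.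
      assert (p < L) by lia. apply Nat.ltb_lt in H0 as H0'. rewrite H0'. simpl. symmetry. apply W_pre; auto.
    + assert (k < L).
      { destruct (Nat.lt_ge_cases k L) as [|Hkl]; auto. apply Nat.ltb_ge in Hkl. rewrite Hkl in Hk. discriminate. }
      apply Nat.ltb_lt in H as H'. rewrite H' in Hk. simpl in Hk.
      rewrite W_pre by auto. split; auto. split; auto. rewrite <- Ho, !ones_cnt1. apply cnt1_ext. intros p Hp.
      assert (p < L) by lia. apply Nat.ltb_lt in H0 as H0'. rewrite H0'. simpl. apply W_pre; auto.
  - destruct (cntb_surj (ins i) (Hinf i) (j - m)) as [k [Hk Hc]].
    assert (Hd : W (next i) j = dval i k). { unfold dval. fold m. rewrite Hc. f_equal. lia. }
    rewrite Hd.
    pose proof (W_blk0 i k) as E0. pose proof (W_blk1 i k) as E1. rewrite Hk in E0, E1.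
    pose proof (W_ones i k) as O0. pose proof (W_ones i (S k)) as O1.
    simpl cntb in O1. rewrite Hk in O1. fold m in O0, O1. rewrite Hc in O0, O1.
    replace (L + 2 * S k) with (S (L + 2*k + 1)) in O1 by lia.
    assert (Hol : Nat.odd (L + 2*k) = Nat.odd L) by apply Nat.odd_add_mul_2.
    assert (Hol1 : Nat.odd (L + 2*k + 1) = negb (Nat.odd L)).
    { rewrite Nat.add_1_r, Nat.odd_succ, Nat.even_add_mul_2, <- Nat.negb_odd. auto. }
    assert (Oe : W i (L + 2*k) = true -> ones (W i) (L + 2*k) = S j).
    { intros HW. rewrite ones_cnt1, cnt1_S_true, O0 by auto. lia. }
    assert (Oo : ones (W i) (L + 2*k + 1) = S j) by (rewrite ones_cnt1, O1; lia).
    apply bool_eq_iff. rewrite rho_true.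
    destruct (Nat.odd L) eqn:HL, (dval i k) eqn:HD; simpl in E0, E1.
    + split; auto. intros _. exists (L + 2*k). auto.
    + split; [|discriminate]. intros [k' [Hk' [Ho' Hod']]].
      assert (k' = L + 2*k + 1). { apply (ones_inj (W i)). exact Hk'. exact E1. rewrite Ho', Oo. reflexivity. }
      subst. rewrite Hol1 in Hod'. discriminate.
    + split; auto. intros _. exists (L + 2*k + 1). auto.
    + split; [|discriminate]. intros [k' [Hk' [Ho' Hod']]].
      assert (k' = L + 2*k) by (apply (ones_inj (W i)); auto; rewrite Oe; auto). subst. congruence.
Qed.
End Frame.
Open Scope R_scope.

Definition term (b:word) (k:nat) : R := if b k then (1/2)^(k+1) else 0.

Lemma geo_is : is_series (fun k:nat => (1/2)^(k+1)) 1.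
Proof.
  assert (H : Rabs (1/2) < 1) by (rewrite Rabs_pos_eq; lra).
  pose proof (is_series_scal_l (1/2) _ _ (is_series_geom (1/2) H)) as H2.
  match type of H2 with is_series _ ?l =>
    assert (E : l = 1) by (unfold scal; simpl; unfold mult; simpl; field); rewrite E in H2 end.
  eapply is_series_ext; [|exact H2]. intros n. unfold scal; simpl; unfold mult; simpl.
  rewrite Nat.add_1_r. simpl. reflexivity.
Qed.

Lemma term_bound b n : 0 <= term b n <= (1/2)^(n+1).
Proof. unfold term. assert (0 < (1/2)^(n+1)) by (apply pow_lt; lra). destruct (b n); lra. Qed.

Lemma ex_term b : ex_series (term b).
Proof.
  apply (@ex_series_le R_AbsRing R_CompleteNormedModule _ (fun k:nat => (1/2)^(k+1))); [|eexists; apply geo_is].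
  intros n. change (norm (term b n)) with (Rabs (term b n)).
  pose proof (term_bound b n). rewrite Rabs_pos_eq; lra.
Qed.

Lemma bv_bounds b : 0 <= bin_val b <= 1.
Proof.
  unfold bin_val. split.
  - assert (Series (fun _ => 0) = 0).
    { rewrite (Series_ext _ (fun n:nat => 0 * 0)) by (intros; ring).
      rewrite Series_scal_l. ring. }
    rewrite <- H at 1. apply Series_le; [|apply ex_term]. intros n. pose proof (term_bound b n). unfold term in *. lra.
  - apply Rle_trans with (Series (fun k:nat => (1/2)^(k+1))).
    + apply Series_le; [|eexists; apply geo_is]. intros n; pose proof (term_bound b n); unfold term in *; lra.
    + right. apply is_series_unique, geo_is.
Qed.

Lemma bv_step b : bin_val b = (if b O then 1/2 else 0) + /2 * bin_val (fun p => b (S p)).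
Proof.
  unfold bin_val. rewrite Series_incr_1 by apply ex_term. rewrite <- Series_scal_l.
  f_equal.
  - unfold term. destruct (b O); simpl; lra.
  - apply Series_ext. intros n. unfold term. destruct (b (S n)); simpl; lra.
Qed.

Fixpoint psum (b:word) (N:nat) : R :=
  match N with O => 0 | S N' => psum b N' + term b N' end.

Lemma psum_nonneg b N : 0 <= psum b N.
Proof. induction N; simpl; [lra|]. pose proof (term_bound b N). lra. Qed.

Lemma psum_ext b c N : (forall p, (p < N)%nat -> b p = c p) -> psum b N = psum c N.
Proof. induction N; intros H; simpl; auto. rewrite IHN by (intros; apply H; lia).
  unfold term. rewrite H by lia. auto. Qed.

Lemma bv_split b N : bin_val b = psum b N + (1/2)^N * bin_val (fun p => b (N + p)%nat).
Proof.
  induction N.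
  - simpl. ring_simplify. reflexivity.
  - rewrite IHN. rewrite (bv_step (fun p => b (N + p)%nat)).
    replace (fun p => b (N + S p)%nat) with (fun p => b (S N + p)%nat)
      by (apply functional_extensionality; intros; f_equal; lia).
    simpl psum. unfold term. rewrite Nat.add_0_r. rewrite Nat.add_1_r. simpl pow.
    set (t := bin_val _). destruct (b N); field.
Qed.

Lemma bv_ge_half b : b O = true -> 1/2 <= bin_val b.
Proof. intros H. rewrite bv_step, H. pose proof (bv_bounds (fun p => b (S p))). lra. Qed.

Lemma bv_pos b k : b k = true -> 0 < bin_val b.
Proof.
  intros H. rewrite (bv_split b k). pose proof (psum_nonneg b k).
  assert (1/2 <= bin_val (fun p => b (k + p)%nat)) by (apply bv_ge_half; rewrite Nat.add_0_r; auto).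
  assert (0 < (1/2)^k) by (apply pow_lt; lra). nra.
Qed.

Lemma bv_lt b c k : (forall q, (q < k)%nat -> b q = c q) -> b k = false -> c k = true ->
  inf_many_ones c -> bin_val b < bin_val c.
Proof.
  intros Hq Hb Hc Hinf. rewrite (bv_split b k), (bv_split c k).
  rewrite (psum_ext b c k Hq).
  rewrite (bv_step (fun p => b (k+p)%nat)), (bv_step (fun p => c (k+p)%nat)).
  rewrite Nat.add_0_r, Hb, Hc.
  destruct (Hinf (S k)) as [p [Hp Hcp]].
  assert (0 < bin_val (fun p0 => c (k + S p0)%nat)).
  { apply (bv_pos _ (p - S k)). rewrite <- Hcp. f_equal. lia. }
  pose proof (bv_bounds (fun p0 => b (k + S p0)%nat)).
  assert (0 < (1/2)^k) by (apply pow_lt; lra). nra.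
Qed.

Lemma bv_inj b c : inf_many_ones b -> inf_many_ones c -> bin_val b = bin_val c -> b = c.
Proof.
  intros Hb Hc E. apply functional_extensionality.
  assert (forall p q, (q <= p)%nat -> b q = c q).
  { induction p; intros q Hq.
    - assert (q = O) by lia. subst.
      destruct (b O) eqn:E1, (c O) eqn:E2; auto; exfalso.
      + pose proof (bv_lt c b 0 ltac:(intros; lia) E2 E1 Hb). lra.
      + pose proof (bv_lt b c 0 ltac:(intros; lia) E1 E2 Hc). lra.
    - destruct (Nat.eq_dec q (S p)); [|apply IHp; lia]. subst.
      destruct (b (S p)) eqn:E1, (c (S p)) eqn:E2; auto; exfalso.
      + pose proof (bv_lt c b (S p) ltac:(intros; symmetry; apply IHp; lia) E2 E1 Hb). lra.
      + pose proof (bv_lt b c (S p) ltac:(intros; apply IHp; lia) E1 E2 Hc). lra. }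
  intros p. apply (H p). lia.
Qed.

Lemma beta_bv b : inf_many_ones b -> beta (bin_val b) = b.
Proof.
  intros Hb. unfold beta.
  destruct (epsilon_spec (inhabits (fun _ : nat => false))
     (fun b0 => inf_many_ones b0 /\ bin_val b0 = bin_val b)) as [H1 H2].
  { exists b. auto. }
  apply bv_inj; auto.
Qed.

Lemma Rmap_bv b : inf_many_ones b -> Rmap (bin_val b) = bin_val (rho b).
Proof.
  intros Hb. unfold Rmap. destruct (Req_EM_T (bin_val b) 0) as [E|E].
  - exfalso. destruct (Hb O) as [k [_ Hk]]. pose proof (bv_pos b k Hk). lra.
  - rewrite beta_bv; auto.
Qed.

Fixpoint rem (y:R) (p:nat) : R :=
  match p with O => y | S p' => if Rle_dec (1/2) (rem y p') then 2 * rem y p' - 1 else 2 * rem y p' end.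
Definition dig (y:R) (p:nat) : bool := if Rle_dec (1/2) (rem y p) then true else false.

Lemma rem_bounds y : 0 <= y <= 1 -> forall p, 0 <= rem y p <= 1.
Proof. intros H p; induction p; simpl; auto. destruct Rle_dec; lra. Qed.

Lemma dig_sum y N : y = psum (dig y) N + (1/2)^N * rem y N.
Proof.
  induction N; simpl; [ring|]. rewrite IHN at 1. unfold term, dig.
  rewrite Nat.add_1_r. simpl pow. destruct Rle_dec; field.
Qed.
Open Scope R_scope.

Definition nextn (n i : nat) : nat := if S i <? n then S i else O.

Lemma iter_next n m : (m < n)%nat -> Nat.iter m (nextn n) O = m.
Proof. induction m; intros H; simpl; auto. rewrite IHm by lia. unfold nextn.
  destruct (S m <? n) eqn:E; auto. apply Nat.ltb_ge in E. lia. Qed.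

Lemma iter_next_n n : (1 <= n)%nat -> Nat.iter n (nextn n) O = O.
Proof. intros H. destruct n; [lia|]. simpl. rewrite iter_next by lia. unfold nextn.
  destruct (S n <? S n) eqn:E; auto. apply Nat.ltb_lt in E. lia. Qed.

Lemma orbit L f ins next (H0 : forall i, ins i O = true)
  (Hinf : forall i K, exists k, (K <= k)%nat /\ ins i k = false)
  (C1 : forall i t, (t < cnt1 (f i) L)%nat ->
        f (next i) t = rho (fun p => andb (p <? L)%nat (f i p)) t) :
  forall m, Nat.iter m Rmap (bin_val (W L f ins next O)) = bin_val (W L f ins next (Nat.iter m next O)).
Proof.
  induction m; simpl; auto. rewrite IHm. rewrite Rmap_bv by (apply W_inf; auto).
  f_equal. apply functional_extensionality. intros j. apply W_rho; auto.
Qed.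

Lemma cnt1_zero g m : supp g O -> cnt1 g m = O.
Proof. intros H. induction m; simpl; auto. rewrite IHm, H by lia. auto. Qed.

Lemma density y eps : 0 <= y <= 1 -> 0 < eps -> exists x, is_periodic x /\ Rabs (x - y) < eps.
Proof.
  intros Hy He.
  destruct (pow_lt_1_zero (1/2) ltac:(rewrite Rabs_pos_eq; lra) eps He) as [N HN].
  specialize (HN N (le_n N)). rewrite Rabs_pos_eq in HN by (apply pow_le; lra).
  set (f0 := fun p => andb (p <? N)%nat (dig y p)).
  set (fD := fun i => Nat.iter i rho f0).
  set (ins := fun (i k : nat) => (k =? O)%nat).
  set (n := (2 * N + 1)%nat).
  assert (Hsupp : forall i, supp (fD i) N).
  { induction i.
    - intros p Hp. simpl. unfold f0. apply Nat.ltb_ge in Hp. rewrite Hp. auto.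
    - eapply supp_mono; [|apply rho_supp, IHi]. apply cnt1_le. }
  assert (H0 : forall i, ins i O = true) by reflexivity.
  assert (Hinf : forall i K, exists k, (K <= k)%nat /\ ins i k = false).
  { intros i K. exists (S K). split; auto. }
  assert (C1 : forall i t, (t < cnt1 (fD i) N)%nat ->
        fD (nextn n i) t = rho (fun p => andb (p <? N)%nat (fD i p)) t).
  { intros i t Ht.
    replace (fun p => andb (p <? N)%nat (fD i p)) with (fD i).
    2:{ apply functional_extensionality. intros p. destruct (p <? N)%nat eqn:E; auto.
        apply Nat.ltb_ge in E. apply Hsupp; auto. }
    unfold nextn. destruct (S i <? n)%nat eqn:E; [reflexivity|].
    apply Nat.ltb_ge in E. exfalso.
    assert (supp (fD i) O) by (apply (kill f0 N); [apply Hsupp with (i:=O)|unfold n in E; lia]).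
    rewrite cnt1_zero in Ht; auto. lia. }
  exists (bin_val (W N fD ins (nextn n) O)). split.
  - split; [apply bv_bounds|]. exists n. split; [unfold n; lia|].
    rewrite (orbit N fD ins (nextn n) H0 Hinf C1). rewrite iter_next_n by (unfold n; lia). auto.
  - rewrite (bv_split _ N). rewrite (dig_sum y N) at 1.
    rewrite (psum_ext _ (dig y) N).
    2:{ intros p Hp. rewrite W_pre by auto. simpl. unfold f0. apply Nat.ltb_lt in Hp. rewrite Hp. auto. }
    pose proof (bv_bounds (fun p => W N fD ins (nextn n) O (N + p)%nat)).
    pose proof (rem_bounds y Hy N).
    assert (0 < (1/2)^N) by (apply pow_lt; lra).
    match goal with |- Rabs ?e < _ => replace e with ((1/2)^N * (bin_val (fun p => W N fD ins (nextn n) O (N + p)%nat) - rem y N)) by ring end.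
    rewrite Rabs_mult, Rabs_pos_eq by lra.
    apply Rle_lt_trans with ((1/2)^N * 1); [|lra].
    apply Rmult_le_compat_l; [lra|]. apply Rabs_le. lra.
Qed.

Definition insU (s : nat -> bool) (i k : nat) : bool :=
  orb (k <=? i)%nat (andb (i =? O)%nat (andb (Nat.even k) (s k))).
Definition fU : nat -> word := fun _ _ => false.
Definition WU (n : nat) (s : nat -> bool) (i : nat) : word := W O fU (insU s) (nextn n) i.

Lemma insU0 s i : insU s i O = true.
Proof. unfold insU. simpl. auto. Qed.

Lemma insU_inf s i K : exists k, (K <= k)%nat /\ insU s i k = false.
Proof.
  exists (2 * (K + i) + 1)%nat. split; [lia|]. unfold insU.
  assert ((2 * (K + i) + 1 <=? i)%nat = false) by (apply Nat.leb_gt; lia). rewrite H.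
  rewrite Nat.add_1_r, Nat.even_succ, Nat.odd_mul. simpl.
  destruct (i =? O)%nat; auto.
Qed.

Lemma C1U (n : nat) i t : (t < cnt1 (fU i) O)%nat ->
   fU (nextn n i) t = rho (fun p => andb (p <? O)%nat (fU i p)) t.
Proof. simpl. lia. Qed.

Lemma WU_inf n s i : inf_many_ones (WU n s i).
Proof. apply W_inf; [apply insU0|apply insU_inf]. Qed.

Lemma WU_orbit n s m : Nat.iter m Rmap (bin_val (WU n s O)) = bin_val (WU n s (Nat.iter m (nextn n) O)).
Proof. apply orbit; [apply insU0|apply insU_inf|apply C1U]. Qed.

Lemma WU_ins n s i k : insU s i k = negb (orb (WU n s i (2*k)%nat) (WU n s i (2*k+1)%nat)).
Proof.
  unfold WU.
  pose proof (W_blk0 O fU (insU s) (nextn n) (insU0 s) i k) as E0.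
  pose proof (W_blk1 O fU (insU s) (nextn n) (insU0 s) i k) as E1.
  simpl Nat.odd in E0, E1. change (0 + 2 * k)%nat with (2*k)%nat in E0.
  change (0 + 2 * k + 1)%nat with (2*k+1)%nat in E1. rewrite E0, E1.
  destruct (insU s i k); auto. destruct (dval _ _ _ _ _ _); auto.
Qed.

Lemma WU_minper n s : (1 <= n)%nat -> has_min_period n (bin_val (WU n s O)).
Proof.
  intros Hn. split; [apply bv_bounds|]. split.
  - rewrite WU_orbit, iter_next_n; auto.
  - intros m Hm E. rewrite WU_orbit, iter_next in E by lia.
    apply bv_inj in E; [|apply WU_inf|apply WU_inf].
    pose proof (WU_ins n s m 1) as A. pose proof (WU_ins n s O 1) as B.
    rewrite E in A. rewrite <- A in B. unfold insU in B.
    assert ((1 <=? m)%nat = true) by (apply Nat.leb_le; lia). rewrite H in B. simpl in B. discriminate.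
Qed.

Lemma uncount n : (1 <= n)%nat -> uncountable (has_min_period n).
Proof.
  intros Hn [F HF].
  set (g := fun j => epsilon (inhabits (fun _ : nat => false))
                  (fun s' => bin_val (WU n s' O) = F j)).
  set (s := fun k => negb (g (k / 2 - 1)%nat k)).
  destruct (HF _ (WU_minper n s Hn)) as [j Hj].
  assert (Hg : bin_val (WU n (g j) O) = F j).
  { unfold g. apply epsilon_spec. exists s. auto. }
  rewrite Hj in Hg. apply bv_inj in Hg; [|apply WU_inf|apply WU_inf].
  set (k := (2 * j + 2)%nat).
  pose proof (WU_ins n (g j) O k) as A. pose proof (WU_ins n s O k) as B.
  rewrite Hg in A. rewrite <- A in B. unfold insU in B.
  assert (Hk1 : (k <=? O)%nat = false) by (apply Nat.leb_gt; unfold k; lia).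
  assert (Hk2 : Nat.even k = true) by (unfold k; replace (2*j+2)%nat with (2*(j+1))%nat by lia; apply Nat.even_mul).
  rewrite Hk1, Hk2 in B. simpl in B.
  unfold s in B. replace (k / 2 - 1)%nat with j in B.
  - destruct (g j k); discriminate.
  - unfold k. replace (2*j+2)%nat with ((j+1)*2)%nat by lia. rewrite Nat.div_mul by lia. lia.
Qed.

Theorem proposition6p4 :
  (forall y eps : R, 0 <= y <= 1 -> 0 < eps ->
     exists x : R, is_periodic x /\ Rabs (x - y) < eps) /\
  (forall n : nat, (1 <= n)%nat -> uncountable (has_min_period n)).
Proof. split; [apply density|apply uncount]. Qed.
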